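(* Let $(u_k)_{k\ge0}$ be generated by the IHT method with parameter $L>0$, and let $\sigma:=\min\big(b,\sqrt{2\beta/(L+\alpha)}\big)$. Then for every $k\ge1$ and every $p\in[1,\infty)$, $$\|u_{k+1}-u_k\|_{L^p(\Omega)}^p\ge\sigma^p\,\|\chi_k-\chi_{k+1}\|_{L^1(\Omega)}.$$
   Context: Let $\Omega\subset\mathbb R^n$ be a bounded open set with Lebesgue measure. Fix $\alpha\ge0$, $\beta>0$, $b\in(0,+\infty]$ and set $U_{ad}:=\{v\in L^2(\Omega): |v(x)|\le b\text{ a.e. in }\Omega\}$. For $t\in\mathbb R$ let $|t|_0:=0$ if $t=0$ and $|t|_0:=1$ if $t\ne0$; for measurable $u$ let $\|u\|_0:=\operatorname{meas}\{x\in\Omega:u(x)\ne0\}$. Define $g(u):=\frac\alpha2\|u\|_{L^2(\Omega)}^2+\beta\|u\|_0$. The function $f:L^2(\Omega)\to\mathbb R$ is weakly lower semicontinuous, bounded from below and Fréchet differentiable; $\nabla f(u)\in L^2(\Omega)$ is the Riesz representative of its derivative, and $\nabla f$ is Lipschitz continuous on $L^2(\Omega)$ with constant $L_f$. IHT method: given $L>0$ and $u_0\in U_{ad}$, for $k=0,1,\dots$ let $u_{k+1}$ be a global solution of $\min_{u\in U_{ad}} f(u_k)+\int_\Omega\nabla f(u_k)(u-u_k)\,dx+\frac L2\|u-u_k\|_{L^2(\Omega)}^2+g(u)$ (a solution exists). Let $\chi_k$ denote the characteristic function of $\{x\in\Omega:u_k(x)\ne0\}$. *)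

(* Defs.v *)
From HB Require Import structures.
From mathcomp Require Import all_boot all_order all_algebra.
From mathcomp Require Import all_classical all_reals all_analysis.
Set Implicit Arguments. Unset Strict Implicit. Unset Printing Implicit Defensive.
Import Order.TTheory GRing.Theory Num.Theory.
Import numFieldNormedType.Exports.
Local Open Scope classical_set_scope.
Local Open Scope ring_scope.

(* R^n is modelled as n.-tuple R with its product (Borel) sigma-algebra. *)
Notation Rn R n := (n.-tuple R).

Section Defs.
Variables (R : realType) (n : nat).
Variable mu : {measure set (Rn R n) -> \bar R}.

Definition is_lebesgue_measure : Prop :=
  forall a b : Rn R n, (forall i, tnth a i <= tnth b i) ->
    mu [set x | forall i, tnth a i <= tnth x i < tnth b i] =
    (\prod_(i < n) (tnth b i - tnth a i))%:E.

Definition is_open_set (Om : set (Rn R n)) : Prop :=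
  forall x, Om x -> exists2 e : R, 0 < e &
    forall y : Rn R n, (forall i, `|tnth y i - tnth x i| < e) -> Om y.

Definition is_bounded_set (Om : set (Rn R n)) : Prop :=
  exists M : R, forall x, Om x -> forall i, `|tnth x i| <= M.

Variable Om : set (Rn R n).

Definition inL2 (u : Rn R n -> R) : Prop :=
  measurable_fun Om u /\
  (\int[mu]_(x in Om) ((u x) ^+ 2)%:E < +oo)%E.

Definition L2inner (u v : Rn R n -> R) : R :=
  fine (\int[mu]_(x in Om) (u x * v x)%:E).

Definition L2norm (u : Rn R n -> R) : R :=
  Num.sqrt (fine (\int[mu]_(x in Om) ((u x) ^+ 2)%:E)).

Definition L0norm (u : Rn R n -> R) : R :=
  fine (mu (Om `&` [set x | u x != 0])).

Definition chi (u : Rn R n -> R) (x : Rn R n) : R :=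
  if u x != 0 then 1 else 0.

Definition Uad (b : \bar R) (v : Rn R n -> R) : Prop :=
  inL2 v /\ {ae mu, forall x, Om x -> ((`|v x|)%:E <= b)%E}.

Definition g_reg (alpha beta : R) (u : Rn R n -> R) : R :=
  alpha / 2 * L2norm u ^+ 2 + beta * L0norm u.

Definition weak_cvgL2 (v : nat -> Rn R n -> R) (w : Rn R n -> R) : Prop :=
  forall z, inL2 z -> (fun j => L2inner (v j) z) @ \oo --> L2inner w z.

Definition smooth_objective (f : (Rn R n -> R) -> R)
    (gradf : (Rn R n -> R) -> (Rn R n -> R)) : Prop :=
  (* f is a function on L^2 (equivalence classes) *)
  (forall u v, inL2 u -> inL2 v -> u = v %[ae mu in Om] -> f u = f v) /\
  (forall u v, inL2 u -> inL2 v -> u = v %[ae mu in Om] ->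
     gradf u = gradf v %[ae mu in Om]) /\
  (forall (v : nat -> Rn R n -> R) w, (forall j, inL2 (v j)) -> inL2 w ->
     weak_cvgL2 v w -> ((f w)%:E <= limn_einf (fun j => (f (v j))%:E))%E) /\
  (exists m : R, forall u, inL2 u -> m <= f u) /\
  (* Frechet differentiable, gradf u the Riesz representative *)
  (forall u, inL2 u -> inL2 (gradf u)) /\
  (forall u, inL2 u -> forall eps : R, 0 < eps -> exists2 delta : R, 0 < delta &
     forall v, inL2 v -> L2norm (v \- u) < delta ->
       `|f v - f u - L2inner (gradf u) (v \- u)| <= eps * L2norm (v \- u)) /\
  (exists Lf : R, forall u v, inL2 u -> inL2 v ->
     L2norm (gradf u \- gradf v) <= Lf * L2norm (u \- v)).

Definition iht_model (f : (Rn R n -> R) -> R)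
    (gradf : (Rn R n -> R) -> (Rn R n -> R)) (alpha beta L : R)
    (uk u : Rn R n -> R) : R :=
  f uk + L2inner (gradf uk) (u \- uk) + L / 2 * L2norm (u \- uk) ^+ 2
  + g_reg alpha beta u.

Definition iht_sequence (f : (Rn R n -> R) -> R)
    (gradf : (Rn R n -> R) -> (Rn R n -> R)) (alpha beta L : R) (b : \bar R)
    (u : nat -> Rn R n -> R) : Prop :=
  Uad b (u 0%N) /\
  forall k : nat, Uad b (u k.+1) /\
    forall v, Uad b v ->
      iht_model f gradf alpha beta L (u k) (u k.+1) <=
      iht_model f gradf alpha beta L (u k) v.

End Defs.

(* Main.v *)
Require Import Defs.
From HB Require Import structures.
From mathcomp Require Import all_boot all_order all_algebra.
From mathcomp Require Import all_classical all_reals all_analysis measurable_realfun.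
From mathcomp Require Import ring lra.
Import Order.TTheory GRing.Theory Num.Theory.
Import numFieldNormedType.Exports.
Local Open Scope classical_set_scope.
Local Open Scope ring_scope.

Section PW.
Context {R : realType}.

Definition Hq (G a alpha beta L s : R) : R :=
  G * (s - a) + L / 2 * (s - a) ^+ 2 + alpha / 2 * s ^+ 2
  + beta * (if s != 0 then 1 else 0).

Lemma pw (G a t t0 m L alpha beta sig : R) :
  0 < L + alpha -> t0 = (L * a - G) / (L + alpha) ->
  t != 0 -> `|t| < sig -> sig ^+ 2 <= 2 * beta / (L + alpha) ->
  (t != m -> (m - t0) ^+ 2 < (t - t0) ^+ 2) -> (t = m -> m = t0) ->
  Hq G a alpha beta L (if t != m then m else 0) < Hq G a alpha beta L t.
Proof.
move=> c0 ht0 t0n tsig sigb h1 h2.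
set q := fun s => G * (s - a) + L / 2 * (s - a) ^+ 2 + alpha / 2 * s ^+ 2.
have key : forall s, q s - q t0 = (L + alpha) / 2 * (s - t0) ^+ 2.
  move=> s; rewrite /q ht0; field; lra.
have Hqe s : Hq G a alpha beta L s = q s + beta * (if s != 0 then 1 else 0) by [].
have b0 : 0 <= beta.
  have : 0 <= 2 * beta / (L + alpha) by apply: le_trans sigb; exact: sqr_ge0.
  by rewrite pmulr_lge0 ?invr_gt0// pmulr_rge0.
rewrite !Hqe t0n mulr1.
case: (boolP (t != m)) => tm.
  have := key m; have := key t; have := h1 tm.
  case: (m != 0); rewrite ?mulr1 ?mulr0; nra.
have etm : t = m by apply/eqP; rewrite -(negbK (t == m)).
have mt0 := h2 etm.
rewrite /= ?eqxx ?mulr0 ?addr0.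
rewrite -etm in mt0.
have k0 := key 0; rewrite sub0r sqrrN -mt0 in k0.
have tt : t ^+ 2 < sig ^+ 2.
  by rewrite -real_normK ?num_real// ltrXn2r.
have : (L + alpha) / 2 * t ^+ 2 < beta.
  have e : (L + alpha) / 2 * (2 * beta / (L + alpha)) = beta by field; lra.
  rewrite -[X in _ < X]e ltr_pM2l ?divr_gt0//.
  exact: lt_le_trans tt sigb.
lra.
Qed.

Definition clipr (r s : R) : R := Num.max (- r) (Num.min r s).

Lemma clip_spec (r s : R) : 0 < r ->
  (s <= - r /\ clipr r s = - r) \/ (- r <= s <= r /\ clipr r s = s) \/
  (r <= s /\ clipr r s = r).
Proof.
move=> r0; rewrite /clipr.
have [sr|sr] := leP s r.
  have [hs|hs] := leP (- r) s.
    by right; left.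
  by left; split => //; exact: ltW.
have [h|h] := leP (- r) r.
  by right; right; split => //; exact: ltW.
lra.
Qed.

Lemma clip_bound (r s : R) : 0 < r -> `|clipr r s| <= r.
Proof. by move=> r0; rewrite ler_norml; case: (clip_spec r s r0) => [[? ->]|[[? ->]|[? ->]]]; lra. Qed.

Lemma clip_abs (r s : R) : 0 < r -> `|clipr r s| <= `|s|.
Proof.
move=> r0; case: (clip_spec r s r0) => [[? ->]|[[? ->]|[? ->]]] //.
  by rewrite normrN gtr0_norm// ler0_norm; lra.
by rewrite gtr0_norm// ger0_norm; lra.
Qed.

Lemma sqr_pos (x : R) : x != 0 -> 0 < x ^+ 2.
Proof. by move=> x0; rewrite lt_neqAle sqr_ge0 andbT eq_sym expf_eq0 /= (negbTE x0). Qed.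

Lemma clip_best (r s t : R) : 0 < r -> `|t| <= r -> t != clipr r s ->
  (clipr r s - s) ^+ 2 < (t - s) ^+ 2.
Proof.
move=> r0; rewrite ler_norml => /andP[t1 t2] tm.
case: (clip_spec r s r0) => [[? e]|[[? e]|[? e]]]; rewrite e in tm *.
- have : t != - r by [].
  rewrite neq_lt => /orP[]; nra.
- rewrite subrr expr0n /=; apply: sqr_pos; by rewrite subr_eq0.
- have : t != r by [].
  rewrite neq_lt => /orP[]; nra.
Qed.

Lemma clip_in (r s : R) : 0 < r -> `|clipr r s| < r -> clipr r s = s.
Proof.
move=> r0; rewrite ltr_norml; case: (clip_spec r s r0) => [[? ->]|[[? ->]|[? ->]]] //; lra.
Qed.

Lemma clip_meas (r : R) : measurable_fun setT (clipr r).
Proof.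
have h1 : measurable_fun setT (cst r \min (@id R)).
  by apply: measurable_minr; [exact: measurable_cst|exact: measurable_id].
exact: (measurable_maxr (measurable_cst (- r)) h1).
Qed.

End PW.

Section L2.
Context (R : realType) (n : nat) (mu : {measure set (n.-tuple R) -> \bar R})
  (Om : set (n.-tuple R)).
Hypotheses (mOm : measurable Om) (finOm : (mu Om < +oo)%E).
Notation T := (n.-tuple R).
Notation int_ f := (mu.-integrable Om (EFin \o f)).

Lemma int_mfun {f : T -> R} : int_ f -> measurable_fun Om f.
Proof. by case/integrableP => /measurable_EFinP. Qed.

Lemma dom_int (h g : T -> R) : measurable_fun Om h ->
  (forall x, Om x -> `|h x| <= g x) -> int_ g -> int_ h.
Proof.
move=> mh hg ig; apply: (le_integrable mOm _ _ ig).
  exact/measurable_EFinP.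
move=> x Ox /=; rewrite lee_fin (le_trans (hg x Ox))//.
exact: ler_norm.
Qed.

Lemma int_add {f g : T -> R} : int_ f -> int_ g -> int_ (fun x => f x + g x).
Proof.
move=> hf hg; have := integrableD mOm hf hg.
by apply: eq_integrable => // x _ /=; rewrite EFinD.
Qed.

Lemma int_scale (c : R) {f : T -> R} : int_ f -> int_ (fun x => c * f x).
Proof.
move=> hf; have := integrableZl mOm c hf.
by apply: eq_integrable => // x _ /=; rewrite EFinM.
Qed.

Lemma int_cst (c : R) : int_ (fun _ => c).
Proof.
apply/integrableP; split; first exact/measurable_EFinP/measurable_cst.
have -> : (\int[mu]_(x in Om) `|(EFin \o (fun=> c)) x|)%E = (\int[mu]_(x in Om) cst `|c|%:E x)%E by [].
by rewrite integral_cst// lte_mul_pinfty.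
Qed.

Lemma inL2_int {u : T -> R} : inL2 mu Om u -> int_ (fun x => u x ^+ 2).
Proof.
case=> mu0 fi; apply/integrableP; split.
  exact/measurable_EFinP/measurable_funX.
rewrite /=; under eq_integral do rewrite ger0_norm ?sqr_ge0//.
exact: fi.
Qed.

Lemma int_inL2 (u : T -> R) : measurable_fun Om u -> int_ (fun x => u x ^+ 2) ->
  inL2 mu Om u.
Proof.
move=> mu0 /integrableP[_ fi]; split => //.
move: fi; rewrite /=; under eq_integral do rewrite ger0_norm ?sqr_ge0//.
by [].
Qed.

Lemma inL2_mfun {u} : inL2 mu Om u -> measurable_fun Om u.
Proof. by case. Qed.

Lemma int_mul {u v : T -> R} : inL2 mu Om u -> inL2 mu Om v ->
  int_ (fun x => u x * v x).
Proof.
move=> hu hv; apply: (@dom_int _ (fun x => u x ^+ 2 + v x ^+ 2)).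
- by apply: measurable_funM; [case: hu|case: hv].
- move=> x _; rewrite normrM.
  have := sqr_ge0 (`|u x| - `|v x|).
  rewrite -[u x ^+ 2]real_normK ?num_real// -[v x ^+ 2]real_normK ?num_real//.
  move: (normr_ge0 (u x)) (normr_ge0 (v x)); nra.
- exact: (int_add (inL2_int hu) (inL2_int hv)).
Qed.

Lemma inL2_dom (h g : T -> R) : measurable_fun Om h ->
  (forall x, Om x -> `|h x| <= `|g x|) -> inL2 mu Om g -> inL2 mu Om h.
Proof.
move=> mh hg ig; apply: int_inL2 => //.
apply: (@dom_int _ (fun x => g x ^+ 2)); last exact: inL2_int.
  exact: measurable_funX.
move=> x Ox; rewrite normrX -[g x ^+ 2]real_normK ?num_real//.
by apply: lerXn2r; rewrite ?nnegrE ?normr_ge0// hg.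
Qed.

Lemma inL2D {u v : T -> R} : inL2 mu Om u -> inL2 mu Om v ->
  inL2 mu Om (fun x => u x + v x).
Proof.
move=> hu hv; apply: int_inL2.
  by apply: measurable_funD; [case: hu|case: hv].
apply: (@dom_int _ (fun x => 2 * u x ^+ 2 + 2 * v x ^+ 2)).
- by apply: measurable_funX; apply: measurable_funD; [case: hu|case: hv].
- move=> x _; rewrite ger0_norm ?sqr_ge0//.
  have := sqr_ge0 (u x - v x); nra.
- apply: int_add; apply: int_scale; exact: inL2_int.
Qed.

Lemma inL2Z (c : R) {u : T -> R} : inL2 mu Om u -> inL2 mu Om (fun x => c * u x).
Proof.
move=> hu; apply: int_inL2.
  by apply: measurable_funM; [exact: measurable_cst|case: hu].
apply: (@eq_integrable _ _ _ mu _ mOm (EFin \o (fun x => c ^+ 2 * u x ^+ 2))).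
  by move=> x _ /=; rewrite exprMn.
exact/int_scale/inL2_int.
Qed.

Lemma ind_mfun {v : T -> R} : measurable_fun Om v ->
  measurable (Om `&` [set x | v x != 0]) /\
  {in Om, (fun x => if v x != 0 then 1 else 0 : R) =1 \1_(Om `&` [set x | v x != 0])}.
Proof.
move=> mv; split.
  have -> : Om `&` [set x | v x != 0] = Om `&` v @^-1` (~` [set 0]).
    by apply/seteqP; split => x [Ox /= H]; split => //; apply/eqP.
  exact: mv mOm _ (measurableC (measurable_set1 _)).
move=> x /[!inE] Ox; rewrite indicE; case: ifP => /= vx.
  by rewrite mem_set.
by rewrite memNset// => -[_ /=]; rewrite vx.
Qed.

Lemma ind_int {v : T -> R} : measurable_fun Om v ->
  int_ (fun x => if v x != 0 then 1 else 0).
Proof.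
move=> mv; have [mA eqA] := ind_mfun mv.
apply: (@dom_int _ (fun=> 1)); last exact: int_cst.
  have mI : measurable_fun Om (\1_(Om `&` [set x | v x != 0]) : T -> R) by exact: measurable_indic.
  by apply: (eq_measurable_fun _ _ mI) => x Ox; rewrite (eqA x Ox).
by move=> x _; case: (v x != 0); rewrite ?normr1 ?normr0.
Qed.

Lemma L0norm_eq (v : T -> R) : measurable_fun Om v ->
  L0norm mu Om v = \int[mu]_(x in Om) (if v x != 0 then 1 else 0).
Proof.
move=> mv; have [mA eqA] := ind_mfun mv.
rewrite /L0norm /Rintegral (eq_integral (fun x => (\1_(Om `&` [set x | v x != 0]) x)%:E)).
  rewrite integral_indic//; congr (fine (mu _)); apply/seteqP; split => x /=.
    by case=> a b. by case=> -[].
    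

by move=> x Ox; rewrite eqA.
Qed.

Definition Hf (G a : T -> R) (alpha beta L : R) (x : T) (s : R) : R :=
  Hq (G x) (a x) alpha beta L s.

Lemma Hf_int G alpha beta L uk v :
  inL2 mu Om uk -> inL2 mu Om G -> inL2 mu Om v ->
  int_ (fun x => Hf G uk alpha beta L x (v x)).
Proof.
move=> huk hG hv.
have hd : inL2 mu Om (fun x => v x + (-1) * uk x) by apply: inL2D => //; exact: inL2Z.
have hd' : inL2 mu Om (v \- uk).
  by have -> : (v \- uk) = (fun x => v x + (-1) * uk x) by apply/funext => x /=; rewrite mulN1r.
have i1 : int_ (fun x => G x * (v x - uk x)) := int_mul hG hd'.
have i2 : int_ (fun x => L / 2 * (v x - uk x) ^+ 2) := int_scale _ (inL2_int hd').
have i3 : int_ (fun x => alpha / 2 * v x ^+ 2) := int_scale _ (inL2_int hv).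
have i4 : int_ (fun x => beta * (if v x != 0 then 1 else 0)) :=
  int_scale _ (ind_int (inL2_mfun hv)).
exact: (int_add (int_add (int_add i1 i2) i3) i4).
Qed.

Lemma model_eq f gradf alpha beta L uk v :
  inL2 mu Om uk -> inL2 mu Om (gradf uk) -> inL2 mu Om v ->
  iht_model mu Om f gradf alpha beta L uk v =
  f uk + \int[mu]_(x in Om) Hf (gradf uk) uk alpha beta L x (v x).
Proof.
move=> huk hG hv.
have hd : inL2 mu Om (fun x => v x + (-1) * uk x) by apply: inL2D => //; exact: inL2Z.
have hd' : inL2 mu Om (v \- uk).
  by have -> : (v \- uk) = (fun x => v x + (-1) * uk x) by apply/funext => x /=; rewrite mulN1r.
have i1 : int_ (fun x => gradf uk x * (v x - uk x)) := int_mul hG hd'.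
have i2 : int_ (fun x => L / 2 * (v x - uk x) ^+ 2) := int_scale _ (inL2_int hd').
have i3 : int_ (fun x => alpha / 2 * v x ^+ 2) := int_scale _ (inL2_int hv).
have i4 : int_ (fun x => beta * (if v x != 0 then 1 else 0)) :=
  int_scale _ (ind_int (inL2_mfun hv)).
rewrite /Hf /Hq (RintegralD mOm (int_add (int_add i1 i2) i3) i4).
rewrite (RintegralD mOm (int_add i1 i2) i3) (RintegralD mOm i1 i2).
rewrite (RintegralZl _ mOm (ind_int (inL2_mfun hv))).
rewrite (RintegralZl _ mOm (inL2_int hv)) (RintegralZl _ mOm (inL2_int hd')).
rewrite /iht_model /g_reg /L2inner /L2norm L0norm_eq; last exact: inL2_mfun.
rewrite !sqr_sqrtr; try (apply: Rintegral_ge0 => x _; exact: sqr_ge0).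
rewrite /Rintegral /=.
lra.
Qed.


Lemma int_sub {f g : T -> R} : int_ f -> int_ g -> int_ (fun x => f x - g x).
Proof.
move=> hf hg; have := integrableB mOm hf hg.
by apply: eq_integrable => // x _ /=; rewrite EFinB.
Qed.

Lemma threshold f gradf alpha beta L (b : \bar R) (cl : R -> R) (sig : R)
    (uk t : T -> R) :
  measurable_fun setT cl ->
  (forall s, (`|cl s|%:E <= b)%E) ->
  (forall s, `|cl s| <= `|s|) ->
  (forall s y, (`|y|%:E <= b)%E -> y != cl s -> (cl s - s) ^+ 2 < (y - s) ^+ 2) ->
  (forall s, (`|cl s|%:E < b)%E -> cl s = s) ->
  0 < sig -> (sig%:E <= b)%E -> sig ^+ 2 <= 2 * beta / (L + alpha) ->
  0 < L + alpha ->
  inL2 mu Om uk -> inL2 mu Om (gradf uk) -> Uad mu Om b t ->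
  (forall v, Uad mu Om b v ->
     iht_model mu Om f gradf alpha beta L uk t <=
     iht_model mu Om f gradf alpha beta L uk v) ->
  {ae mu, forall x, Om x -> t x != 0 -> sig <= `|t x|}.
Proof.
move=> mcl clb cla clbest clin sig0 sigb sigq c0 huk hG [ht tb] hopt.
set G := gradf uk.
set t0 := fun x => (L * uk x - G x) / (L + alpha).
have ht0 : inL2 mu Om t0.
  have -> : t0 = (fun x => L / (L + alpha) * uk x + (- (L + alpha)^-1) * G x).
    by apply/funext => x; rewrite /t0 /=; field; lra.
  by apply: inL2D; apply: inL2Z.
have mt := inL2_mfun ht.
have mt0 := inL2_mfun ht0.
set E := Om `&` [set x | 0 < `|t x| < sig].
have mE : measurable E.
  have -> : E = Om `&` t @^-1` ((@Num.norm _ R) @^-1` `]0, sig[).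
    by apply/seteqP; split => x [Ox /= h]; split => //=; rewrite ?in_itv /= in h *.
  apply: mt => //.
  rewrite -[X in measurable X]setTI.
  exact: normr_measurable measurableT _ (measurable_itv _).
set N := Om `&` [set x | t x != cl (t0 x)].
have mN : measurable N.
  have -> : N = Om `&` (t \- (cl \o t0)) @^-1` (~` [set 0]).
    apply/seteqP; split => x [Ox /= h]; split => //=.
      by move=> /eqP; rewrite subr_eq0 (negbTE h).
    by apply/eqP => e; apply: h; rewrite e subrr.
  exact: (measurable_funB mt (measurableT_comp mcl mt0)) mOm _
    (measurableC (measurable_set1 _)).
set w := fun x => t x + \1_E x * (\1_N x * cl (t0 x) - t x).
have wnE : forall x, ~ E x -> w x = t x.
  by move=> x nx; rewrite /w indicE memNset //= mul0r addr0.
have wE : forall x, E x -> w x = if t x != cl (t0 x) then cl (t0 x) else 0.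
  move=> x ex; rewrite /w indicE mem_set //= mul1r.
  have Ox : Om x by case: ex.
  rewrite indicE; case: ifP => h.
    by rewrite mem_set /=; [rewrite mul1r; lra | split].
  by rewrite memNset /=; [rewrite mul0r; lra | case=> _ /=; rewrite h].
have mw : measurable_fun Om w.
  have m1 : measurable_fun Om (\1_E : T -> R) by exact: measurable_indic.
  have m2 : measurable_fun Om (\1_N : T -> R) by exact: measurable_indic.
  have m3 := measurable_funM m2 (measurableT_comp mcl mt0).
  have m4 := measurable_funB m3 mt.
  have m5 := measurable_funM m1 m4.
  have m6 := measurable_funD mt m5.
  exact: m6.
have hat : inL2 mu Om (fun x => `|t x|).
  apply: (inL2_dom (fun x => `|t x|) t) => //.
    by have := measurableT_comp (@normr_measurable R setT) mt.
  by move=> x _; rewrite normr_id.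
have hat0 : inL2 mu Om (fun x => `|t0 x|).
  apply: (inL2_dom (fun x => `|t0 x|) t0) => //.
    by have := measurableT_comp (@normr_measurable R setT) mt0.
  by move=> x _; rewrite normr_id.
have hw : inL2 mu Om w.
  apply: (inL2_dom w (fun x => `|t x| + `|t0 x|) mw); last exact: inL2D.
  move=> x Ox; rewrite [X in _ <= X]ger0_norm ?addr_ge0 //.
  have := normr_ge0 (t x); have := normr_ge0 (t0 x).
  case: (pselect (E x)) => ex; last by rewrite wnE //; lra.
  rewrite wE //; case: ifP => _; last by rewrite normr0; lra.
  have := cla (t0 x); lra.
have b0 : (0 <= b)%E by apply: (le_trans _ sigb); rewrite lee_fin ltW.
have hUw : Uad mu Om b w.
  split => //; move: tb; apply: filterS => x hx Ox.
  case: (pselect (E x)) => ex; last by rewrite wnE //; exact: hx Ox.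
  by rewrite wE //; case: ifP => _; [exact: clb | rewrite normr0].
have := hopt w hUw; rewrite !model_eq // => hle.
set d := fun x => Hf G uk alpha beta L x (t x) - Hf G uk alpha beta L x (w x).
have iHt := Hf_int G alpha beta L uk t huk hG ht.
have iHw := Hf_int G alpha beta L uk w huk hG hw.
have idd : int_ d := int_sub iHt iHw.
have dpos : forall x, E x -> 0 < d x.
  move=> x ex; rewrite /d subr_gt0 wE // /Hf.
  case: (ex) => _ /andP[tpos tsig].
  have tb' : (`|t x|%:E <= b)%E by apply: (le_trans _ sigb); rewrite lee_fin ltW.
  apply: (@pw R (G x) (uk x) (t x) (t0 x) (cl (t0 x)) L alpha beta sig c0 (erefl _) _ tsig sigq).
  - by rewrite -normr_gt0.
  - exact: clbest.
  - move=> e; apply: clin; rewrite -e; apply: (lt_le_trans _ sigb); by rewrite lte_fin.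
have d0 : forall x, Om x -> 0 <= d x.
  move=> x Ox; case: (pselect (E x)) => ex; first exact/ltW/dpos.
  by rewrite /d wnE // subrr.
have Rd : \int[mu]_(x in Om) d x = 0.
  apply/eqP; rewrite eq_le Rintegral_ge0 // andbT.
  rewrite /d RintegralB //; lra.
have hd0 : ae_eq mu Om (EFin \o d) (cst 0).
  apply/ae_eq_integral_abs => //.
    by case/integrableP: idd.
  transitivity (\int[mu]_(x in Om) (d x)%:E)%E.
    by apply: eq_integral => x /[!inE] Ox; rewrite /= ger0_norm // d0.
  have := integrable_fin_num mOm idd => /fineK <-.
  by have : Rintegral mu Om d = 0 := Rd; rewrite /Rintegral => ->.
move: hd0; rewrite /ae_eq; apply: filterS => x hx Ox tx0.
rewrite leNgt; apply/negP => ltx.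
have ex : E x by split => //=; rewrite normr_gt0 tx0 ltx.
have := dpos x ex; have := hx Ox; rewrite /= => -[->]; by rewrite ltxx.
Qed.

End L2.

Lemma finite_Om (R : realType) (n : nat) (mu : {measure set (n.-tuple R) -> \bar R})
  (Om : set (n.-tuple R)) :
  is_lebesgue_measure mu -> measurable Om -> is_bounded_set Om -> (mu Om < +oo)%E.
Proof.
move=> hleb mOm [M hM].
set a : n.-tuple R := [tuple (- (`|M| + 1)) | i < n].
set b : n.-tuple R := [tuple (`|M| + 1) | i < n].
have hab : forall i, tnth a i <= tnth b i.
  move=> i; rewrite !tnth_mktuple; have := normr_ge0 M; lra.
set B := [set x : n.-tuple R | forall i, tnth a i <= tnth x i < tnth b i].
have mB : measurable B.
  have -> : B = \big[setI/setT]_(i <- enum 'I_n)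
      ((fun x : n.-tuple R => tnth x i) @^-1` `[tnth a i, tnth b i[).
    rewrite -bigcap_seq; apply/seteqP; split => x /=.
      by move=> hx i _; rewrite /= in_itv /= hx.
    by move=> hx i; have := hx i; rewrite /= mem_enum in_itv /=; apply.
  apply: bigsetI_measurable => i _.
  rewrite -[X in measurable X]setTI.
  exact: measurable_tnth measurableT _ (measurable_itv _).
have OB : Om `<=` B.
  move=> x Ox i; rewrite !tnth_mktuple.
  have := hM x Ox i; rewrite ler_norml => /andP[h1 h2].
  have := ler_norm M; have := ler_normr M; lra.
apply: (le_lt_trans (le_measure _ _ _ OB)); rewrite ?inE //.
rewrite /B; exact: (eq_rect_r (fun z => (z < +oo)%E) (ltry _) (hleb a b hab)).
Qed.

Theorem mainTheorem7 (R : realType) (n : nat)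
    (mu : {measure set (n.-tuple R) -> \bar R})
    (Om : set (n.-tuple R))
    (alpha beta L : R) (b : \bar R)
    (f : (n.-tuple R -> R) -> R) (gradf : (n.-tuple R -> R) -> (n.-tuple R -> R))
    (u : nat -> n.-tuple R -> R) :
  is_lebesgue_measure mu ->
  measurable Om -> is_open_set Om -> is_bounded_set Om ->
  0 <= alpha -> 0 < beta -> (0 < b)%E -> 0 < L ->
  smooth_objective mu Om f gradf ->
  iht_sequence mu Om f gradf alpha beta L b u ->
  let sigma : R := fine (Order.min b (Num.sqrt (2 * beta / (L + alpha)))%:E) in
  forall (k : nat) (p : R), (1 <= k)%N -> 1 <= p ->
    (\int[mu]_(x in Om) ((`|u k.+1 x - u k x|) `^ p)%:E >=
     (sigma `^ p)%:E * \int[mu]_(x in Om) (`|chi (u k) x - chi (u k.+1) x|)%:E)%E.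
Proof.
move=> hleb mOm _ hbnd alpha0 beta0 b0 L0 hsm [hU0 hseq] sigma k p k1 p1.
have finOm := @finite_Om R n mu Om hleb mOm hbnd.
case: hsm => _ [_ [_ [_ [hgrad _]]]].
have c0 : 0 < L + alpha by lra.
set sq := Num.sqrt (2 * beta / (L + alpha)).
have sq0 : 0 < sq by rewrite sqrtr_gt0 divr_gt0 // mulr_gt0.
have sqq : sq ^+ 2 = 2 * beta / (L + alpha).
  by rewrite sqr_sqrtr // ltW // divr_gt0 // mulr_gt0.
have bcase : (exists2 r, b = r%:E & 0 < r) \/ b = +oo%E.
  by move: b0; case Eb: b => [r| |] //= r0; [left; exists r => //; rewrite -lte_fin | right].
have [cl [mcl [clb [cla [clbest clin]]]]] : exists cl : R -> R,
    measurable_fun setT cl /\ (forall s, (`|cl s|%:E <= b)%E) /\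
    (forall s, `|cl s| <= `|s|) /\
    (forall s y, (`|y|%:E <= b)%E -> y != cl s -> (cl s - s) ^+ 2 < (y - s) ^+ 2) /\
    (forall s, (`|cl s|%:E < b)%E -> cl s = s).
  case: bcase => [[r -> r0]|->].
    exists (clipr r); split; first exact: clip_meas.
    split; first by move=> s; rewrite lee_fin; exact: clip_bound.
    split; first by move=> s; exact: clip_abs.
    split; first by move=> s y; rewrite lee_fin => hy; exact: clip_best.
    by move=> s; rewrite lte_fin; exact: clip_in.
  exists id; split; first exact: measurable_id.
  split; first by move=> s; exact: leey.
  split; first by [].
  split => // s y _ ys; rewrite subrr expr0n /=; apply: sqr_pos; by rewrite subr_eq0.
have [sig0 [sigb sigq]] : 0 < sigma /\ (sigma%:E <= b)%E /\ sigma ^+ 2 <= 2 * beta / (L + alpha).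
  rewrite /sigma -/sq; case: bcase => [[r -> r0]|->].
    rewrite -EFin_min /=.
    have hm0 : 0 < Num.min r sq by rewrite lt_min r0 sq0.
    have hmr : Num.min r sq <= r by rewrite ge_min lexx.
    have hms : Num.min r sq <= sq by rewrite ge_min lexx orbT.
    split => //; split; first by rewrite lee_fin.
    rewrite -sqq; nra.
  by rewrite min_r ?leey //= sqq.
have thr : forall j, {ae mu, forall x, Om x -> u j.+1 x != 0 -> sigma <= `|u j.+1 x|}.
  move=> j; have [hUj hopt] := hseq j.
  have hUk : Uad mu Om b (u j) by case: j {hUj hopt} => [|j] //; exact: (hseq j).1.
  have hk : inL2 mu Om (u j) by case: hUk.
  exact: (@threshold R n mu Om mOm finOm f gradf alpha beta L b cl sigma (u j) (u j.+1) mcl clb cla clbest clin sig0 sigb sigq c0 hk (hgrad _ hk) hUj hopt).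
case: k k1 => // k _.
have mu' : forall j, measurable_fun Om (u j).
  move=> j; have hUk : Uad mu Om b (u j) by case: j => [|j] //; exact: (hseq j).1.
  by case: hUk => -[].
have m1 : forall j, measurable_fun Om (chi (u j)).
  move=> j; exact: (@int_mfun R n mu Om _ (@ind_int R n mu Om mOm finOm (u j) (mu' j))).
have p0 : 0 <= p by lra.
have hf10 : forall x, Om x -> (0 <= (`|chi (u k.+1) x - chi (u k.+2) x|)%:E)%E.
  by move=> x _; rewrite lee_fin normr_ge0.
have hmf1 : measurable_fun Om (fun x => (`|chi (u k.+1) x - chi (u k.+2) x|)%:E).
  apply/measurable_EFinP.
  by have := measurableT_comp (@normr_measurable R setT) (measurable_funB (m1 k.+1) (m1 k.+2)).
rewrite -(ge0_integralZl_EFin mu mOm hf10 hmf1 (powR_ge0 sigma p)).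
have hg10 : forall x, Om x ->
    (0 <= (sigma `^ p)%:E * (`|chi (u k.+1) x - chi (u k.+2) x|)%:E)%E.
  by move=> x _; rewrite -EFinM lee_fin mulr_ge0 ?powR_ge0.
have hmg1 : measurable_fun Om
    (fun x => (sigma `^ p)%:E * (`|chi (u k.+1) x - chi (u k.+2) x|)%:E)%E.
  exact: measurable_funeM.
have hg20 : forall x, Om x -> (0 <= (`|u k.+2 x - u k.+1 x| `^ p)%:E)%E.
  by move=> x _; rewrite lee_fin powR_ge0.
have hmg2 : measurable_fun Om (fun x => (`|u k.+2 x - u k.+1 x| `^ p)%:E).
  apply/measurable_EFinP.
  by have := measurableT_comp (measurable_powR p)
    (measurableT_comp (@normr_measurable R setT) (measurable_funB (mu' k.+2) (mu' k.+1))).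
apply: (ae_ge0_le_integral mOm hg10 hmg1 hg20 hmg2).
apply: filterS2 (thr k) (thr k.+1) => x h1 h2 Ox.
rewrite -EFinM lee_fin /chi.
have pw1 : forall a, sigma <= `|a| -> sigma `^ p <= `|a| `^ p.
  by move=> a ha; apply: ge0_ler_powR => //; rewrite nnegrE ?normr_ge0 // ltW.
case: (boolP (u k.+1 x != 0)) => ha; case: (boolP (u k.+2 x != 0)) => hb.
- by rewrite subrr normr0 mulr0 powR_ge0.
- rewrite subr0 normr1 mulr1; move/negPn/eqP: hb => ->.
  by rewrite sub0r normrN; apply: pw1; exact: h1.
- rewrite sub0r normrN normr1 mulr1; move/negPn/eqP: ha => ->.
  by rewrite subr0; apply: pw1; exact: h2.
- by rewrite subrr normr0 mulr0 powR_ge0.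
Qed.
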